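(* Let $\{x^k\}$ be generated by the ABP algorithm described in the context, and assume (A1)–(A7): (A1) $\mathcal F$ is continuously differentiable; (A2) $C$, $Q$ nonempty closed convex, $z_i^*>-\infty$ for each $i$; (A3) each $f_i$ convex; (A4) $\Omega\ne\emptyset$; (A5) $\lambda_k>0$, $\sum\lambda_k=\infty$, $\sum\lambda_k^2<\infty$; (A6) $0<\underline\alpha\le\alpha_k\le\bar\alpha$, $0<\underline\beta\le\beta_k\le\bar\beta$, $0<\underline\gamma\le\gamma_k\le\bar\gamma$ for all $k$; (A7) $\varphi_{\mathrm{lb}}=\varphi^*$. Then there is $\bar M<\infty$ with $\|d^k\|\le\bar M$ for all $k$, and $\mu\le\eta_k\le\bar\eta:=\max(\mu,\bar M)$ for all $k$.
   Context: Let $n,m\ge1$, $\mathcal F=(f_1,\dots,f_m)\colon\mathbb R^n\to\mathbb R^m$, $C\subset\mathbb R^n$, $Q\subset\mathbb R^m$, $Q^+:=Q-\mathbb R^m_+=\{y-u:y\in Q,u\in\mathbb R^m_+\}$; $P_S$ is Euclidean projection onto a nonempty closed convex set $S$. Let $z_i^*:=\inf_{x\in C}f_i(x)$, fix $r$ with $r_i>0$, $\sum r_i=1$. Define $\varphi(x):=\max_ir_i(f_i(x)-z_i^* )$, $H(x):=\tfrac12\mathrm{dist}^2(x,C)$, $G(x):=\tfrac12\mathrm{dist}^2(\mathcal F(x),Q^+)$, $\mathcal S:=\{x:H(x)=0,G(x)=0\}$, $\varphi^*:=\inf_{\mathcal S}\varphi$, $\Omega:=\{x\in\mathcal S:\varphi(x)=\varphi^*\}$,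 $\varphi_{\mathrm{lb}}:=\inf_C\varphi$. ABP algorithm: given $x^0$, $\mu>0$, positive sequences $\{\alpha_k\},\{\beta_k\},\{\gamma_k\},\{\lambda_k\}$: $p^k:=P_{Q^+}(\mathcal F(x^k))$, $\rho^k:=\mathcal F(x^k)-p^k$, $z^k:=x^k-P_C(x^k)$, $v^k:=J_{\mathcal F}(x^k)^T\rho^k$, $w^k:=r_{i^*}\nabla f_{i^*}(x^k)$ with arbitrary $i^*\in\arg\max_ir_i(f_i(x^k)-z_i^* )$, $\Delta_k:=\varphi(x^k)-\varphi_{\mathrm{lb}}$, $d^k:=\alpha_k\mathbf 1_{\{\Delta_k\ge0\}}w^k+\beta_kz^k+\gamma_kv^k$, $\eta_k:=\max(\mu,\|d^k\|)$, $x^{k+1}:=x^k-(\lambda_k/\eta_k)d^k$. *)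

(* Defs.v *)
From HB Require Import structures.
From mathcomp Require Import all_boot all_order all_algebra.
From mathcomp Require Import all_classical all_reals all_analysis.
Set Implicit Arguments. Unset Strict Implicit. Unset Printing Implicit Defensive.
Import Order.TTheory GRing.Theory Num.Theory.
Import numFieldNormedType.Exports.
Local Open Scope classical_set_scope.
Local Open Scope ring_scope.

Section ABPDefs.
Variable R : realType.

(* Euclidean norm on R^n (the library norm on matrices is the max norm). *)
Definition enorm n (v : 'rV[R]_n) : R := Num.sqrt (\sum_(j < n) v ord0 j ^+ 2).

Definition edist n (S : set 'rV[R]_n) (x : 'rV[R]_n) : R :=
  inf [set enorm (x - y) | y in S].

Definition is_proj n (S : set 'rV[R]_n) (x p : 'rV[R]_n) : Prop :=
  S p /\ forall y, S y -> enorm (x - p) <= enorm (x - y).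

Definition convex_fun n (g : 'rV[R]_n -> R) : Prop :=
  forall x y (t : R), 0 <= t <= 1 ->
    g (t *: x + (1 - t) *: y) <= t * g x + (1 - t) * g y.

Definition C1 n (g : 'rV[R]_n -> R) : Prop :=
  (forall x, differentiable g x) /\ (forall v, continuous (fun x => 'D_v g x)).

Definition unitv n (j : 'I_n) : 'rV[R]_n := delta_mx 0 j.

Definition grad n (g : 'rV[R]_n -> R) (x : 'rV[R]_n) : 'rV[R]_n :=
  \row_j 'D_(unitv j) g x.

Section Problem.
Variables (n m : nat) (f : 'I_m -> 'rV[R]_n -> R)
  (C : set 'rV[R]_n) (Q : set 'rV[R]_m) (r : 'I_m -> R).

Definition Fmap (x : 'rV[R]_n) : 'rV[R]_m := \row_i f i x.

(* J_F(x)^T rho *)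
Definition JtF (x : 'rV[R]_n) (rho : 'rV[R]_m) : 'rV[R]_n :=
  \row_j \sum_(i < m) rho ord0 i * 'D_(unitv j) (f i) x.

Definition Qplus : set 'rV[R]_m :=
  [set z | exists (y u : 'rV[R]_m), Q y /\ (forall i, 0 <= u ord0 i) /\ z = y - u].

Definition zstar (i : 'I_m) : R := inf [set f i x | x in C].

Definition phi (x : 'rV[R]_n) : R := sup [set r i * (f i x - zstar i) | i in setT].

Definition Hfun (x : 'rV[R]_n) : R := (edist C x) ^+ 2 / 2.
Definition Gfun (x : 'rV[R]_n) : R := (edist Qplus (Fmap x)) ^+ 2 / 2.

Definition Sfeas : set 'rV[R]_n := [set x | Hfun x = 0 /\ Gfun x = 0].
Definition phistar : R := inf (phi @` Sfeas).
Definition Omega : set 'rV[R]_n := [set x | Sfeas x /\ phi x = phistar].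
Definition philb : R := inf (phi @` C).

(* ABP quantities, given the iterates x, the projections p^k = P_{Q^+}(F(x^k)),
   c^k = P_C(x^k), and the selected indices i*_k. *)
Variables (mu : R) (alpha beta gamma lambda : nat -> R)
  (x : nat -> 'rV[R]_n) (p : nat -> 'rV[R]_m) (c : nat -> 'rV[R]_n)
  (istar : nat -> 'I_m).

Definition rho_k k : 'rV[R]_m := Fmap (x k) - p k.
Definition z_k k : 'rV[R]_n := x k - c k.
Definition v_k k : 'rV[R]_n := JtF (x k) (rho_k k).
Definition w_k k : 'rV[R]_n := r (istar k) *: grad (f (istar k)) (x k).
Definition Delta_k k : R := phi (x k) - philb.
Definition d_k k : 'rV[R]_n :=
  (alpha k * ((0 <= Delta_k k)%R : bool)%:R) *: w_k k + beta k *: z_k k + gamma k *: v_k k.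
Definition eta_k k : R := Num.max mu (enorm (d_k k)).

Definition ABP_run : Prop :=
  [/\ forall k, is_proj Qplus (Fmap (x k)) (p k),
      forall k, is_proj C (x k) (c k),
      forall k j, r j * (f j (x k) - zstar j) <=
                  r (istar k) * (f (istar k) (x k) - zstar (istar k))
    & forall k, x k.+1 = x k - (lambda k / eta_k k) *: d_k k].

End Problem.
End ABPDefs.

(* Main.v *)
Require Import Defs.
From HB Require Import structures.
From mathcomp Require Import all_boot all_order all_algebra.
From mathcomp Require Import all_classical all_reals all_analysis.
From mathcomp Require Import ring lra.
Import Order.TTheory GRing.Theory Num.Theory.
Import numFieldNormedType.Exports.
Local Open Scope classical_set_scope.
Local Open Scope ring_scope.

Set Implicit Arguments. Unset Strict Implicit. Unset Printing Implicit Defensive.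

Section Aux.
Variable R : realType.

Definition dot n (u v : 'rV[R]_n) : R := \sum_(j < n) u ord0 j * v ord0 j.

Lemma enorm_ge0 n (v : 'rV[R]_n) : 0 <= enorm v.
Proof. exact: sqrtr_ge0. Qed.

Lemma enorm_sq n (v : 'rV[R]_n) : enorm v ^+ 2 = dot v v.
Proof.
rewrite /enorm sqr_sqrtr; last by apply: sumr_ge0 => j _; exact: sqr_ge0.
by apply: eq_bigr => j _; rewrite expr2.
Qed.

Lemma comp_le_enorm n (v : 'rV[R]_n) j : `|v ord0 j| <= enorm v.
Proof.
rewrite /enorm -(sqrtr_sqr (v ord0 j)) ler_wsqrtr //.
rewrite (bigD1 j) //= lerDl; apply: sumr_ge0 => i _; exact: sqr_ge0.
Qed.

Lemma enorm_le_sum n (v : 'rV[R]_n) : enorm v <= \sum_j `|v ord0 j|.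
Proof.
have s0 : 0 <= \sum_j `|v ord0 j| by apply: sumr_ge0.
rewrite /enorm -(ger0_norm s0) -sqrtr_sqr ler_wsqrtr // expr2 mulr_suml.
apply: ler_sum => i _; rewrite (bigD1 i) //= mulrDr -expr2 real_normK ?num_real //.
by rewrite lerDl; apply: mulr_ge0 => //; apply: sumr_ge0.
Qed.

Lemma enorm0P n (v : 'rV[R]_n) : enorm v = 0 -> v = 0.
Proof.
move=> h; apply/rowP => j; rewrite mxE; apply/normr0_eq0/eqP.
by rewrite eq_le normr_ge0 andbT -h comp_le_enorm.
Qed.

Lemma dotC n (u v : 'rV[R]_n) : dot u v = dot v u.
Proof. by apply: eq_bigr => j _; rewrite mulrC. Qed.

Lemma dotBl n (u w v : 'rV[R]_n) : dot (u - w) v = dot u v - dot w v.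
Proof. by rewrite /dot -sumrB; apply: eq_bigr => j _; rewrite !mxE mulrBl. Qed.

Lemma dotDl n (u w v : 'rV[R]_n) : dot (u + w) v = dot u v + dot w v.
Proof. by rewrite /dot -big_split; apply: eq_bigr => j _; rewrite !mxE mulrDl. Qed.

Lemma dotZl n a (u v : 'rV[R]_n) : dot (a *: u) v = a * dot u v.
Proof. by rewrite /dot mulr_sumr; apply: eq_bigr => j _; rewrite !mxE mulrA. Qed.

Lemma dot_le n (u v : 'rV[R]_n) : dot u v <= (\sum_j `|u ord0 j|) * enorm v.
Proof.
rewrite /dot mulr_suml; apply: ler_sum => j _.
apply: le_trans (ler_norm _) _; rewrite normrM ler_wpM2l //; exact: comp_le_enorm.
Qed.

Lemma enorm_sqB n (u v : 'rV[R]_n) :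
  enorm (u - v) ^+ 2 = enorm u ^+ 2 - 2 * dot v u + enorm v ^+ 2.
Proof.
rewrite !enorm_sq /dot mulr_sumr -sumrB -big_split /=; apply: eq_bigr => j _; rewrite !mxE.
ring.
Qed.


Lemma convex_pt n (S : set 'rV[R]_n) (y c : 'rV[R]_n) t :
  convex_set S -> S y -> S c -> 0 <= t -> t <= 1 -> S (t *: y + (1 - t) *: c).
Proof.
move=> cS Sy Sc t0 t1.
have := cS y c (Itv01 t0 t1) (mem_set Sy) (mem_set Sc).
by rewrite inE.
Qed.

Lemma proj_VI n (S : set 'rV[R]_n) x c y : convex_set S -> is_proj S x c -> S y ->
  dot (y - c) (x - c) <= 0.
Proof.
move=> cS [Sc hc] Sy.
set D := dot (y - c) (x - c); set N := enorm (y - c) ^+ 2.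
have key t : 0 <= t -> t <= 1 -> 2 * t * D <= t ^+ 2 * N.
  move=> t0 t1; have := hc _ (convex_pt cS Sy Sc t0 t1).
  have -> : x - (t *: y + (1 - t) *: c) = (x - c) - t *: (y - c).
    rewrite scalerBl scale1r scalerBr; apply/rowP => j; rewrite !mxE; ring.
  move=> h; have h2 : enorm (x - c) ^+ 2 <= enorm (x - c - t *: (y - c)) ^+ 2.
    by rewrite ler_pXn2r // ?nnegrE ?enorm_ge0.
  move: h2; rewrite [enorm (x - c - _) ^+ 2]enorm_sqB dotZl -/D.
  have -> : enorm (t *: (y - c)) ^+ 2 = t ^+ 2 * N.
    rewrite /N !enorm_sq dotZl; rewrite [dot (y - c) _]dotC dotZl; by rewrite mulrA expr2.
  move=> h3; lra.
rewrite leNgt; apply/negP => Dpos.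
have N0 : 0 <= N by rewrite /N sqr_ge0.
have ND : 0 < N + D by lra.
have t0 : 0 <= D / (N + D) by rewrite divr_ge0 // ltW.
have t1 : D / (N + D) <= 1 by rewrite ler_pdivrMr // mul1r; lra.
have := key _ t0 t1.
have -> : (D / (N + D)) ^+ 2 * N = D / (N + D) * (D * N / (N + D)).
  by rewrite expr2; field; rewrite gt_eqF.
rewrite /(_ / _); set u := (N + D)^-1.
have u0 : 0 < u by rewrite invr_gt0.
have uN : u * (N + D) = 1 by rewrite mulVf // gt_eqF.
move=> h.
have h' : 2 * D * D * u <= D * D * N * u * u.
  have e1 : 2 * (D * u) * D = 2 * D * D * u by ring.
  have e2 : D * u * (D * N * u) = D * D * N * u * u by ring.
  by rewrite -e1 -e2.
have h2 : 2 * D * D <= D * D * N * u.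
  by rewrite -(ler_pM2r u0).
have DD : 0 < D * D by rewrite mulr_gt0.
have : 2 * (D * D) * (N + D) <= D * D * N by nra.
nra.
Qed.


Lemma le0_of_eps (D K : R) : 0 <= K -> (forall e, 0 < e -> D <= K * e) -> D <= 0.
Proof.
move=> K0 h; rewrite leNgt; apply/negP => D0.
have K1 : 0 < K + 1 by lra.
have := h (D / (K + 1) / 2) (divr_gt0 (divr_gt0 D0 K1) (ltr0Sn _ 1)).
have : K * (D / (K + 1) / 2) < D.
  have u0 : 0 < (K + 1)^-1 by rewrite invr_gt0.
  have uK : (K + 1)^-1 * (K + 1) = 1 by rewrite mulVf // gt_eqF.
  set u := (K + 1)^-1 in u0 uK *.
  have : K * u <= 1 by nra.
  move=> Ku; rewrite /(_ / _) -/u.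
  have : K * (D * u / 2) = (K * u) * D / 2 by ring.
  move=> ->; nra.
move=> a b; lra.
Qed.

Lemma proj_VI_dist n (S : set 'rV[R]_n) x c q : convex_set S -> is_proj S x c ->
  Defs.edist S q = 0 -> dot (q - c) (x - c) <= 0.
Proof.
move=> cS [Sc hc] e0.
apply: (@le0_of_eps _ (\sum_j `|(x - c) ord0 j|)); first by apply: sumr_ge0.
move=> e epos.
have ne : [set enorm (q - y) | y in S] !=set0 by exists (enorm (q - c)), c.
have ie : inf [set enorm (q - y) | y in S] < e by rewrite -/(Defs.edist S q) e0.
have [_ [y Sy <-] lt] := @inf_lt R _ e ne ie.
have -> : q - c = (y - c) + (q - y) by apply/rowP => j; rewrite !mxE; ring.
rewrite dotDl.
have h1 := proj_VI cS (conj Sc hc) Sy.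
have h2 : dot (q - y) (x - c) <= (\sum_j `|(x - c) ord0 j|) * e.
  rewrite dotC; apply: le_trans (dot_le _ _) _; apply: ler_wpM2l; [by apply: sumr_ge0 | exact: ltW].
lra.
Qed.

Lemma grad_ineq n (g : 'rV[R]_n -> R) x y : convex_fun g -> differentiable g x ->
  'D_(y - x) g x <= g y - g x.
Proof.
move=> cg dg.
have dv := @diff_derivable _ _ _ g x (y - x) dg.
have c2 := cvg_dnbhs_at_right dv.
rewrite /derive -(cvg_lim _ c2) //.
apply: limr_le; first exact: (cvgP _ c2).
near=> h.
have h0 : 0 < h by near: h; exact: nbhs_right_gt.
have h1 : h <= 1 by near: h; exact: nbhs_right_ltW.
rewrite /= -[_ *: _]/(_ * _).
have -> : h *: (y - x) + x = h *: y + (1 - h) *: x.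
  by apply/rowP => j; rewrite !mxE; ring.
have := cg y x h; rewrite ltW // h1 => /(_ isT) cv.
rewrite ler_pdivrMl //; lra.
Unshelve. all: by end_near.
Qed.


Lemma D_lin n (g : 'rV[R]_n -> R) x v : differentiable g x ->
  'D_v g x = \sum_j v ord0 j * 'D_(unitv R j) g x.
Proof.
move=> dg; rewrite deriveE // {1}(row_sum_delta v) linear_sum.
apply: eq_bigr => j _; rewrite linearZ /= deriveE //.
Qed.

Lemma D_opp n (g : 'rV[R]_n -> R) x v : differentiable g x ->
  'D_(- v) g x = - 'D_v g x.
Proof.
move=> dg; rewrite !D_lin // -sumrN; apply: eq_bigr => j _; by rewrite !mxE mulNr.
Qed.

Lemma phi_ge n m (f : 'I_m -> 'rV[R]_n -> R) (C : set 'rV[R]_n) (r : 'I_m -> R) y i :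
  r i * (f i y - zstar f C i) <= phi f C r y.
Proof.
apply: ub_le_sup; last by exists i.
exists (\sum_i0 `|r i0 * (f i0 y - zstar f C i0)|) => _ [i0 _ <-].
apply: le_trans (ler_norm _) _.
by rewrite (bigD1 i0) //= lerDl; apply: sumr_ge0.
Qed.

Lemma phi_eq n m (f : 'I_m -> 'rV[R]_n -> R) (C : set 'rV[R]_n) (r : 'I_m -> R) y i :
  (forall j, r j * (f j y - zstar f C j) <= r i * (f i y - zstar f C i)) ->
  phi f C r y = r i * (f i y - zstar f C i).
Proof.
move=> h; apply/eqP; rewrite eq_le phi_ge andbT.
apply: ge_sup; first by exists (r i * (f i y - zstar f C i)), i.
by move=> _ [j _ <-].
Qed.

Lemma Qplus_convex m (Q : set 'rV[R]_m) : convex_set Q -> convex_set (Qplus Q).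
Proof.
move=> cQ a b t; rewrite !inE => -[y1 [u1 [Qy1 [u1p ->]]]] -[y2 [u2 [Qy2 [u2p ->]]]].
have t0 : 0 <= t%:num by [].
have t1 : t%:num <= 1 by [].
exists (t%:num *: y1 + (1 - t%:num) *: y2), (t%:num *: u1 + (1 - t%:num) *: u2).
split; first exact: convex_pt.
split.
  move=> i; rewrite !mxE; apply: addr_ge0; apply: mulr_ge0 => //; lra.
apply/rowP => j; rewrite !mxE /= /unstable.onem; ring.
Qed.

Lemma Qplus_sub m (Q : set 'rV[R]_m) (z u : 'rV[R]_m) : Qplus Q z -> (forall i, 0 <= u ord0 i) ->
  Qplus Q (z - u).
Proof.
move=> [y [u1 [Qy [u1p ->]]]] up; exists y, (u1 + u); split => //; split.
  by move=> i; rewrite mxE addr_ge0.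
by rewrite opprD addrA.
Qed.


Lemma cont_bnd n (g : 'rV[R]_n -> R) (xb : 'rV[R]_n) (B : R) : continuous g ->
  exists M, 0 <= M /\
    forall y : 'rV[R]_n, (forall j, `|y ord0 j - xb ord0 j| <= B) -> `|g y| <= M.
Proof.
move=> gc.
pose A := fun i : 'I_n => `[xb ord0 i - B, xb ord0 i + B]%classic.
have cK : compact [set v : 'rV[R]_n | forall i, A i (v ord0 i)].
  by apply: rV_compact => i; exact: segment_compact.
have := compact_bounded (continuous_compact (@continuous_subspaceT _ _ _ g gc) cK).
move=> [M [Mreal hM]].
exists (Num.max 0 (M + 1)); split; first by rewrite le_max lexx.
move=> y hy.
have Ky : [set v : 'rV[R]_n | forall i, A i (v ord0 i)] y.
  move=> i; rewrite /A /= in_itv /= -ler_distl; exact: hy.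
have M1 : M < M + 1 by rewrite ltrDl.
have := hM (M + 1) M1 (g y) (ex_intro2 _ _ y Ky erefl).
by move=> /= h; rewrite le_max h orbT.
Qed.


Lemma dotNl n (u v : 'rV[R]_n) : dot (- u) v = - dot u v.
Proof. by rewrite -scaleN1r dotZl mulN1r. Qed.

Lemma dot_unitv n i (v : 'rV[R]_n) : dot (unitv R i) v = v ord0 i.
Proof.
rewrite /dot (bigD1 i) //= big1 => [|j ji]; rewrite !mxE ?eqxx /= ?mul1r ?addr0 //.
by rewrite (negbTE ji) mul0r.
Qed.

Lemma sq_half0 (a : R) : a ^+ 2 / 2 = 0 -> a = 0.
Proof.
by move/eqP; rewrite mulf_eq0 invr_eq0 pnatr_eq0 orbF expf_eq0 /= => /eqP.
Qed.

Lemma dot_grad n (g : 'rV[R]_n -> R) x v : differentiable g x ->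
  dot (grad g x) v = 'D_v g x.
Proof.
move=> dg; rewrite D_lin // /dot; apply: eq_bigr => j _; by rewrite mxE mulrC.
Qed.

Lemma dot_JtF n m (f : 'I_m -> 'rV[R]_n -> R) x rho v :
  (forall i, differentiable (f i) x) ->
  dot (JtF f x rho) v = \sum_i rho ord0 i * 'D_v (f i) x.
Proof.
move=> df; rewrite /dot.
under eq_bigr do rewrite mxE mulr_suml.
rewrite exchange_big /=; apply: eq_bigr => i _.
rewrite D_lin // mulr_sumr; apply: eq_bigr => j _; rewrite mulrA [_ * v _ _]mulrC -mulrA.
by rewrite mulrCA.
Qed.


Lemma term_le_sum k (F : 'I_k -> R) i : (forall j, 0 <= F j) -> F i <= \sum_j F j.
Proof. by move=> h; rewrite (bigD1 i) //= lerDl; apply: sumr_ge0. Qed.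

Lemma abs_mul_le (a A y Y : R) : 0 <= a -> a <= A -> `|y| <= Y -> `|a * y| <= A * Y.
Proof.
move=> a0 aA yY; rewrite normrM ger0_norm //; apply: ler_pM => //.
Qed.

End Aux.

Unset Implicit Arguments. Set Strict Implicit.

Theorem lemma12 (R : realType) (n m : nat) (f : 'I_m -> 'rV[R]_n -> R)
  (C : set 'rV[R]_n) (Q : set 'rV[R]_m) (r : 'I_m -> R)
  (mu : R) (alpha beta gamma lambda : nat -> R)
  (x : nat -> 'rV[R]_n) (p : nat -> 'rV[R]_m) (c : nat -> 'rV[R]_n)
  (istar : nat -> 'I_m) :
  (0 < n)%N -> (0 < m)%N ->
  (forall i, 0 < r i) -> \sum_(i < m) r i = 1 ->
  0 < mu ->
  (forall k, 0 < alpha k) -> (forall k, 0 < beta k) ->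
  (forall k, 0 < gamma k) -> (forall k, 0 < lambda k) ->
  ABP_run f C Q r mu alpha beta gamma lambda x p c istar ->
  (* (A1) *)
  (forall i, C1 (f i)) ->
  (* (A2) *)
  C !=set0 -> closed C -> convex_set C ->
  Q !=set0 -> closed Q -> convex_set Q ->
  (forall i, exists b : R, forall y, C y -> b <= f i y) ->
  (* (A3) *)
  (forall i, convex_fun (f i)) ->
  (* (A4) *)
  Omega f C Q r !=set0 ->
  (* (A5) *)
  series lambda @ \oo --> +oo ->
  cvg (series (fun k => lambda k ^+ 2) @ \oo) ->
  (* (A6) *)
  (exists al au : R, 0 < al /\ forall k, al <= alpha k <= au) ->
  (exists bl bu : R, 0 < bl /\ forall k, bl <= beta k <= bu) ->
  (exists gl gu : R, 0 < gl /\ forall k, gl <= gamma k <= gu) ->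
  (* (A7) *)
  philb f C r = phistar f C Q r ->
  exists Mbar : R,
    (forall k, enorm (d_k f C r alpha beta gamma x p c istar k) <= Mbar) /\
    (forall k, mu <= eta_k f C r mu alpha beta gamma x p c istar k
               <= Num.max mu Mbar).
Proof.
move=> n0 m0 rpos rsum mu0 apos bpos gpos lpos [hp hc histar hx] hC1 Cne Ccl Ccvx
  Qne Qcl Qcvx fb fcvx [xb [[Hx Gx] phixb]] _ lam2 [al [au [al0 hal]]]
  [bl [bu [bl0 hbl]]] [gl [gu [gl0 hgl]]] A7.
have dC : Defs.edist C xb = 0 by apply: sq_half0; exact: Hx.
have dQ : Defs.edist (Qplus Q) (Fmap f xb) = 0 by apply: sq_half0; exact: Gx.
have phib : phi f C r xb = philb f C r by rewrite A7.
have df i y : differentiable (f i) y := (hC1 i).1 y.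
have cQp := Qplus_convex Qcvx.
have rho_ge0 k i : 0 <= rho_k f x p k ord0 i.
  have Qy : Qplus Q (p k - unitv R i).
    apply: Qplus_sub; first by case: (hp k).
    by move=> j; rewrite !mxE; case: (_ && _).
  have := proj_VI cQp (hp k) Qy.
  rewrite addrAC subrr add0r dotNl dot_unitv /rho_k; lra.
have key k : 0 <= dot (d_k f C r alpha beta gamma x p c istar k) (x k - xb).
  rewrite /d_k !dotDl !dotZl.
  have zpart : 0 <= dot (z_k x c k) (x k - xb).
    have h := proj_VI_dist Ccvx (hc k) dC.
    have -> : x k - xb = z_k x c k - (xb - c k) by rewrite /z_k; apply/rowP => j; rewrite !mxE; ring.
    rewrite dotC dotBl dotC -/(z_k x c k) -enorm_sq /z_k.
    rewrite [dot (x k - c k) (xb - c k)]dotC; have := sqr_ge0 (enorm (x k - c k)); lra.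
  have vpart : 0 <= dot (v_k f x p k) (x k - xb).
    rewrite /v_k dot_JtF //.
    have h1 : \sum_i rho_k f x p k ord0 i * (f i (x k) - f i xb) <=
              \sum_i rho_k f x p k ord0 i * 'D_(x k - xb) (f i) (x k).
      apply: ler_sum => i _; apply: ler_wpM2l => //.
      have := grad_ineq xb (fcvx i) (df i (x k)).
      rewrite -[x k - xb]opprB D_opp //; lra.
    apply: le_trans h1.
    have -> : \sum_i rho_k f x p k ord0 i * (f i (x k) - f i xb) =
              dot (rho_k f x p k) (rho_k f x p k) - dot (Fmap f xb - p k) (rho_k f x p k).
      rewrite /dot -sumrB; apply: eq_bigr => i _.
      rewrite /rho_k !mxE; ring.
    have := proj_VI_dist cQp (hp k) dQ.
    rewrite -/(rho_k f x p k) -enorm_sq.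
    have := sqr_ge0 (enorm (rho_k f x p k)); lra.
  have wpart : (0 <= Delta_k f C r x k) -> 0 <= dot (w_k f r x istar k) (x k - xb).
    move=> D0; rewrite /w_k dotZl dot_grad //.
    set i := istar k.
    have g := grad_ineq xb (fcvx i) (df i (x k)).
    rewrite -[x k - xb]opprB D_opp // in g *.
    have e1 := phi_eq (histar k).
    have e2 := phi_ge f C r xb i.
    move: D0; rewrite /Delta_k -phib e1 -/i => D0.
    have := rpos i; nra.
  have a0 := apos k; have b0 := bpos k; have g0 := gpos k.
  case: (boolP (0 <= Delta_k f C r x k)) => hD.
    rewrite mulr1; have := wpart hD; rewrite /w_k dotZl => wp.
    have := mulr_ge0 (ltW a0) wp; have := mulr_ge0 (ltW b0) zpart.
    have := mulr_ge0 (ltW g0) vpart; lra.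
  rewrite mulr0 mul0r.
  have := mulr_ge0 (ltW b0) zpart; have := mulr_ge0 (ltW g0) vpart; lra.
set d := d_k f C r alpha beta gamma x p c istar.
set eta := eta_k f C r mu alpha beta gamma x p c istar.
have eta_pos k : 0 < eta k by rewrite /eta /eta_k lt_max mu0.
have eta_ge k : enorm (d k) <= eta k by rewrite /eta /eta_k le_max lexx orbT.
have step k : enorm (x k.+1 - xb) ^+ 2 <= enorm (x k - xb) ^+ 2 + lambda k ^+ 2.
  rewrite hx -/(d k) -/(eta k).
  set s := lambda k / eta k.
  have s0 : 0 <= s by rewrite divr_ge0 // ltW.
  have -> : x k - s *: d k - xb = (x k - xb) - s *: d k.
    by apply/rowP => j; rewrite !mxE; ring.
  rewrite [enorm (x k - xb - _) ^+ 2]enorm_sqB dotZl.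
  have -> : enorm (s *: d k) ^+ 2 = (s * enorm (d k)) ^+ 2.
    rewrite exprMn !enorm_sq dotZl; rewrite [dot (d k) _]dotC dotZl; by rewrite mulrA expr2.
  have se : s * enorm (d k) <= lambda k.
    rewrite /s mulrAC ler_pdivrMr // ler_wpM2l // ltW //.
  have se0 : 0 <= s * enorm (d k) by rewrite mulr_ge0 // enorm_ge0.
  have := key k; rewrite -/(d k) => kk.
  have := mulr_ge0 s0 kk.
  have : (s * enorm (d k)) ^+ 2 <= lambda k ^+ 2 by rewrite ler_pXn2r // ?nnegrE // ltW.
  lra.
have [L hL] : exists L, forall k, series (fun k => lambda k ^+ 2) k <= L.
  have := cvg_seq_bounded lam2; move=> [M [Mreal hM]].
  have M1 : M < M + 1 by rewrite ltrDl.
  exists (M + 1) => k; have := hM (M + 1) M1 k I => /=.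
  by apply: le_trans; exact: ler_norm.
have bnd k : enorm (x k - xb) ^+ 2 <= enorm (x 0 - xb) ^+ 2 + series (fun k => lambda k ^+ 2) k.
  elim: k => [|k IH].
    by rewrite /series /= big_geq // addr0.
  rewrite seriesSr; have := step k; lra.
set B := 1 + (enorm (x 0 - xb) ^+ 2 + L).
have xbnd k j : `|x k ord0 j - xb ord0 j| <= B.
  have := comp_le_enorm (x k - xb) j; rewrite !mxE => h.
  have := bnd k; have := hL k; have := enorm_ge0 (x k - xb).
  rewrite /B; nra.
have HF : forall i, exists M : R, 0 <= M /\ forall y : 'rV[R]_n,
     (forall j, `|y ord0 j - xb ord0 j| <= B) -> `|f i y| <= M.
  move=> i; apply: cont_bnd => y; exact: differentiable_continuous (df i y).
have [Mf hMf] := boolp.choice HF.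
have HG : forall i, exists M : 'I_n -> R, forall j, 0 <= M j /\ forall y : 'rV[R]_n,
     (forall j, `|y ord0 j - xb ord0 j| <= B) -> `|'D_(unitv R j) (f i) y| <= M j.
  move=> i.
  have HG1 : forall j, exists M : R, 0 <= M /\ forall y : 'rV[R]_n,
     (forall j, `|y ord0 j - xb ord0 j| <= B) -> `|'D_(unitv R j) (f i) y| <= M.
    move=> j; apply: cont_bnd; exact: (hC1 i).2.
  by have [M hM] := boolp.choice HG1; exists M.
have [Mg hMg] := boolp.choice HG.
set MF := \sum_i Mf i.
set MG := \sum_i \sum_j Mg i j.
have MF0 : 0 <= MF by apply: sumr_ge0 => i _; case: (hMf i).
have MG0 : 0 <= MG by apply: sumr_ge0 => i _; apply: sumr_ge0 => j _; case: (hMg i j).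
have fB k i : `|f i (x k)| <= MF.
  apply: le_trans ((hMf i).2 _ (xbnd k)) _.
  by apply: term_le_sum => i0; case: (hMf i0).
have gB k i j : `|'D_(unitv R j) (f i) (x k)| <= MG.
  apply: le_trans ((hMg i j).2 _ (xbnd k)) _.
  have h1 : Mg i j <= \sum_j0 Mg i j0.
    by apply: term_le_sum => j0; case: (hMg i j0).
  have h2 : \sum_j0 Mg i j0 <= MG.
    apply: (@term_le_sum R m (fun i0 : 'I_m => \sum_(j0 < n) Mg i0 j0) i) => i0.
    by apply: sumr_ge0 => j0 _; case: (hMg i0 j0).
  exact: le_trans h1 h2.
case: Qne => q Qq.
have Qpq : Qplus Q q by exists q, 0; split => //; split => [i|]; rewrite ?mxE ?subr0.
case: Cne => c0 Cc0.
set Rb := \sum_i (MF + `|q ord0 i|).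
set Zb := \sum_j (B + `|xb ord0 j - c0 ord0 j|).
have rhoB k : enorm (rho_k f x p k) <= Rb.
  apply: le_trans ((hp k).2 q Qpq) _.
  apply: le_trans (enorm_le_sum _) _; apply: ler_sum => i _; rewrite !mxE.
  by apply: le_trans (ler_normB _ _) _; rewrite lerD2r.
have zB k : enorm (z_k x c k) <= Zb.
  apply: le_trans ((hc k).2 c0 Cc0) _.
  apply: le_trans (enorm_le_sum _) _; apply: ler_sum => j _; rewrite !mxE.
  by apply: le_trans (ler_distD (xb ord0 j) _ _) _; rewrite lerD2r.
have rle1 i : r i <= 1.
  by rewrite -rsum; apply: term_le_sum => j; apply: ltW.
set Db := au * MG + bu * Zb + gu * (\sum_(i < m) Rb * MG).
have dB k j : `|d k ord0 j| <= Db.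
  rewrite /d /d_k !mxE.
  apply: le_trans (ler_normD _ _) _; apply: lerD; first apply: le_trans (ler_normD _ _) _.
  - apply: lerD.
    + have a0 := apos k; have := hal k => /andP[_ ha].
      have c0' : 0 <= alpha k * ((0 <= Delta_k f C r x k)%R : bool)%:R.
        by rewrite mulr_ge0 ?ler0n // ltW.
      have c1 : alpha k * ((0 <= Delta_k f C r x k)%R : bool)%:R <= au.
        case: (0 <= _); rewrite ?mulr1 ?mulr0 //; apply: le_trans ha; exact: ltW.
      apply: abs_mul_le => //.
      rewrite normrM ger0_norm; last exact: ltW.
      rewrite -[X in _ <= X]mul1r; apply: ler_pM => //; exact: ltW.
    + have := hbl k => /andP[_ hb].
      apply: abs_mul_le => //; first exact: ltW.
      have := comp_le_enorm (x k - c k) j; rewrite mxE => hz.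
      have zz := zB k; rewrite /z_k in zz; rewrite mxE in hz; exact: le_trans hz zz.
  - have := hgl k => /andP[_ hg].
    apply: abs_mul_le => //; first exact: ltW.
    apply: le_trans (ler_norm_sum _ _ _) _.
    apply: ler_sum => i _; rewrite normrM; apply: ler_pM => //.
    exact: le_trans (comp_le_enorm _ i) (rhoB k).
exists (\sum_(j < n) Db); split.
  move=> k; apply: le_trans (enorm_le_sum _) _; apply: ler_sum => j _; exact: dB.
have hd k : enorm (d k) <= \sum_(j < n) Db.
  apply: le_trans (enorm_le_sum _) _; apply: ler_sum => j _; exact: dB.
move=> k; apply/andP; split; first by rewrite /eta /eta_k le_max lexx.
by rewrite /eta /eta_k ge_max le_max lexx /= le_max (hd k) orbT.
Qed.
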